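(* Under the hypotheses of Lemma 2.2, the additive map $\varphi:\mathcal{U}\to\mathcal{U}$, $\varphi(U)=\phi(U)-\phi(I)U+[T,U]$ with $T=P_1\phi(P_1)P_2+P_2\phi(P_2)P_1$, is a Jordan derivation, i.e. $\varphi(U^2)=\varphi(U)U+U\varphi(U)$ for all $U\in\mathcal{U}$.
   Context: $\mathcal{U}=\begin{pmatrix}\mathcal{A}&\mathcal{M}\\ \mathcal{N}&\mathcal{B}\end{pmatrix}$ is a generalized matrix ring: $\mathcal{A},\mathcal{B}$ unital 2-torsion free rings, $\mathcal{M}$ a unital $(\mathcal{A},\mathcal{B})$-bimodule faithful on both sides, $\mathcal{N}$ a unital $(\mathcal{B},\mathcal{A})$-bimodule, with bimodule pairings $MN\in\mathcal{A}$, $NM\in\mathcal{B}$ satisfying $(MN)M'=M(NM')$, $(NM)N'=N(MN')$; $\mathcal{U}$ consists of $2\times2$ matrices with usual matrix operations and identity $I$. The hypotheses of Lemma 2.2: $\phi:\mathcal{U}\to\mathcal{U}$ is additive and $\phi(U)\circ V+U\circ\phi(V)=0$ whenever $UV=VU=0$. $X\circ Y=XY+YX$, $[X,Y]=XY-YX$. $P_1=\mathrm{diag}(I_{\mathcal{A}},0)$, $P_2=\mathrm{diag}(0,I_{\mathcal{B}})$. *)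

(* Defs.v *)
From HB Require Import structures.
From mathcomp Require Import all_boot all_order all_algebra.
Set Implicit Arguments. Unset Strict Implicit. Unset Printing Implicit Defensive.
Import GRing.Theory.
Local Open Scope ring_scope.

(* A Morita context (A, B, M, N): A, B unital rings, M a unital (A,B)-bimodule,
   N a unital (B,A)-bimodule, with bimodule pairings M x N -> A, N x M -> B
   satisfying (mn)m' = m(nm') and (nm)n' = n(mn'). *)
Record gmr := GMR {
  gA : pzRingType; gB : pzRingType; gM : zmodType; gN : zmodType;
  amM : gA -> gM -> gM;
  maM : gM -> gB -> gM;
  bnN : gB -> gN -> gN;
  naN : gN -> gA -> gN;
  pMN : gM -> gN -> gA;
  pNM : gN -> gM -> gB;
  amMDl : forall a a' m, amM (a + a') m = amM a m + amM a' m;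
  amMDr : forall a m m', amM a (m + m') = amM a m + amM a m';
  amMA : forall a a' m, amM (a * a') m = amM a (amM a' m);
  amM1 : forall m, amM 1 m = m;
  maMDl : forall m m' b, maM (m + m') b = maM m b + maM m' b;
  maMDr : forall m b b', maM m (b + b') = maM m b + maM m b';
  maMA : forall m b b', maM m (b * b') = maM (maM m b) b';
  maM1 : forall m, maM m 1 = m;
  amMmaM : forall a m b, amM a (maM m b) = maM (amM a m) b;
  bnNDl : forall b b' n, bnN (b + b') n = bnN b n + bnN b' n;
  bnNDr : forall b n n', bnN b (n + n') = bnN b n + bnN b n';
  bnNA : forall b b' n, bnN (b * b') n = bnN b (bnN b' n);
  bnN1 : forall n, bnN 1 n = n;
  naNDl : forall n n' a, naN (n + n') a = naN n a + naN n' a;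
  naNDr : forall n a a', naN n (a + a') = naN n a + naN n a';
  naNA : forall n a a', naN n (a * a') = naN (naN n a) a';
  naN1 : forall n, naN n 1 = n;
  bnNnaN : forall b n a, bnN b (naN n a) = naN (bnN b n) a;
  pMNDl : forall m m' n, pMN (m + m') n = pMN m n + pMN m' n;
  pMNDr : forall m n n', pMN m (n + n') = pMN m n + pMN m n';
  pMN_amM : forall a m n, pMN (amM a m) n = a * pMN m n;
  pMN_naN : forall m n a, pMN m (naN n a) = pMN m n * a;
  pMN_bal : forall m b n, pMN (maM m b) n = pMN m (bnN b n);
  pNMDl : forall n n' m, pNM (n + n') m = pNM n m + pNM n' m;
  pNMDr : forall n m m', pNM n (m + m') = pNM n m + pNM n m';
  pNM_bnN : forall b n m, pNM (bnN b n) m = b * pNM n m;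
  pNM_maM : forall n m b, pNM n (maM m b) = pNM n m * b;
  pNM_bal : forall n a m, pNM (naN n a) m = pNM n (amM a m);
  pMN_assoc : forall m n m', amM (pMN m n) m' = maM m (pNM n m');
  pNM_assoc : forall n m n', bnN (pNM n m) n' = naN n (pMN m n')
}.

Record gmx (G : gmr) := Gmx { e11 : gA G; e12 : gM G; e21 : gN G; e22 : gB G }.

Section Ops.
Variable G : gmr.
Definition gmx_add (X Y : gmx G) : gmx G :=
  Gmx (e11 X + e11 Y) (e12 X + e12 Y) (e21 X + e21 Y) (e22 X + e22 Y).
Definition gmx_opp (X : gmx G) : gmx G :=
  Gmx (- e11 X) (- e12 X) (- e21 X) (- e22 X).
Definition gmx_sub (X Y : gmx G) : gmx G := gmx_add X (gmx_opp Y).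
Definition gmx_zero : gmx G := Gmx 0 0 0 0.
Definition gmx_one : gmx G := Gmx 1 0 0 1.
Definition gmx_mul (X Y : gmx G) : gmx G :=
  Gmx (e11 X * e11 Y + pMN (e12 X) (e21 Y))
      (amM (e11 X) (e12 Y) + maM (e12 X) (e22 Y))
      (bnN (e22 X) (e21 Y) + naN (e21 X) (e11 Y))
      (pNM (e21 X) (e12 Y) + e22 X * e22 Y).
Definition gmx_P1 : gmx G := Gmx 1 0 0 0.
Definition gmx_P2 : gmx G := Gmx 0 0 0 1.
Definition gmx_jordan (X Y : gmx G) : gmx G := gmx_add (gmx_mul X Y) (gmx_mul Y X).
Definition gmx_comm (X Y : gmx G) : gmx G := gmx_sub (gmx_mul X Y) (gmx_mul Y X).
End Ops.

(* Main.v *)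
Require Import Defs.
From HB Require Import structures.
From mathcomp Require Import all_boot all_order all_algebra.
Set Implicit Arguments. Unset Strict Implicit. Unset Printing Implicit Defensive.
Import GRing.Theory.
Local Open Scope ring_scope.

Section Abel.
Variable V : zmodType.
Inductive aexp := AAt of nat | AZ | AAdd of aexp & aexp | AOpp of aexp.
Fixpoint aev (env : seq V) e := match e with
  | AAt n => nth 0 env n | AZ => 0 | AAdd a b => aev env a + aev env b
  | AOpp a => - aev env a end.
Fixpoint ladd (l1 l2 : seq int) := match l1, l2 with
  | [::], _ => l2 | _, [::] => l1 | x :: xs, y :: ys => (x + y) :: ladd xs ys end.
Fixpoint lsem (env : seq V) (l : seq int) := match l with
  | [::] => 0 | x :: xs => (head 0 env) *~ x + lsem (behead env) xs end.
Fixpoint anorm e := match e with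
  | AAt n => ncons n 0 [:: 1] | AZ => [::] | AAdd a b => ladd (anorm a) (anorm b)
  | AOpp a => map (fun x => - x) (anorm a) end.
Lemma lsem_add env l1 l2 : lsem env (ladd l1 l2) = lsem env l1 + lsem env l2.
Proof.
elim: l1 l2 env => [|x xs IH] [|y ys] env /=; rewrite ?add0r ?addr0 //.
by rewrite IH mulrzDr addrACA.
Qed.
Lemma lsem_opp env l : lsem env (map (fun x => - x) l) = - lsem env l.
Proof. by elim: l env => [|x xs IH] env /=; rewrite ?oppr0 // IH mulrNz opprD. Qed.
Lemma lsem_nil l : lsem [::] l = 0.
Proof. by elim: l => //= x xs ->; rewrite mul0rz addr0. Qed.
Lemma lsem_at env n : lsem env (ncons n 0 [:: 1]) = nth 0 env n.
Proof.
elim: n env => [|n IH] [|y ys] /=; rewrite ?addr0 ?mulr1z ?mulr0z ?add0r ?mul0rz ?lsem_nil ?nth_nil //.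
all: try by rewrite IH.
Qed.
Lemma anormE env e : aev env e = lsem env (anorm e).
Proof.
elim: e => [n||a IHa b IHb|a IHa] /=.
- by rewrite lsem_at.
- by [].
- by rewrite lsem_add IHa IHb.
- by rewrite lsem_opp IHa.
Qed.
Lemma lsem0 env l : all (fun x => x == 0) l -> lsem env l = 0.
Proof.
elim: l env => [|x xs IH] env //= /andP[/eqP-> H]; by rewrite IH // mulr0z addr0.
Qed.
Lemma abel_correct env e1 e2 :
  all (fun x => x == 0) (anorm (AAdd e1 (AOpp e2))) -> aev env e1 = aev env e2.
Proof.
move=> H; apply/eqP; rewrite -subr_eq0; apply/eqP.
by rewrite -(lsem0 env H) -anormE.
Qed.
End Abel.

Ltac inlist x l := match l with | (?y :: ?l') => first [unify x y | inlist x l'] end.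
Ltac abel_collect t l :=
  match t with
  | (?a + ?b)%R => let l1 := abel_collect a l in abel_collect b l1
  | (- ?a)%R => abel_collect a l
  | 0%R => l
  | _ => match l with | _ => let _ := match goal with _ => inlist t l end in l
                      | _ => constr:(t :: l) end
  end.
Ltac abel_idx x l := match l with
  | (?y :: ?l') => match goal with
                   | _ => let _ := match goal with _ => unify x y end in constr:(0%N)
                   | _ => let n := abel_idx x l' in constr:(S n) end end.
Ltac abel_reify t l :=
  match t with
  | (?a + ?b)%R => let ea := abel_reify a l in let eb := abel_reify b l in constr:(AAdd ea eb)
  | (- ?a)%R => let ea := abel_reify a l in constr:(AOpp ea)
  | 0%R => constr:(AZ)
  | _ => let n := abel_idx t l in constr:(AAt n)
  end.
Ltac abel := match goal with |- @eq ?T ?a ?b =>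
  let l := abel_collect a (@nil T) in let l := abel_collect b l in
  let ea := abel_reify a l in let eb := abel_reify b l in
  apply: (@abel_correct _ l ea eb); vm_compute; reflexivity end.

Section Add.
Variables (U V W : zmodType) (f : U -> V -> W).
Hypothesis fDl : forall x x' y, f (x + x') y = f x y + f x' y.
Hypothesis fDr : forall x y y', f x (y + y') = f x y + f x y'.
Lemma bil0l y : f 0 y = 0.
Proof. by apply: (@addrI _ (f 0 y)); rewrite -fDl !addr0. Qed.
Lemma bil0r x : f x 0 = 0.
Proof. by apply: (@addrI _ (f x 0)); rewrite -fDr !addr0. Qed.
Lemma bilNl x y : f (- x) y = - f x y.
Proof. by apply: (@addrI _ (f x y)); rewrite -fDl !subrr bil0l. Qed.
Lemma bilNr x y : f x (- y) = - f x y.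
Proof. by apply: (@addrI _ (f x y)); rewrite -fDr !subrr bil0r. Qed.
End Add.

Section Basic.
Variable G : gmr.
Lemma amM0l (m : gM G) : amM 0 m = 0. Proof. exact: (@bil0l _ _ _ _ (@amMDl G)). Qed.
Lemma amM0r (a : gA G) : amM a 0 = 0. Proof. exact: (@bil0r _ _ _ _ (@amMDr G)). Qed.
Lemma amMNl a (m : gM G) : amM (- a) m = - amM a m. Proof. exact: (@bilNl _ _ _ _ (@amMDl G)). Qed.
Lemma amMNr (a : gA G) m : amM a (- m) = - amM a m. Proof. exact: (@bilNr _ _ _ _ (@amMDr G)). Qed.
Lemma maM0l (b : gB G) : maM 0 b = 0. Proof. exact: (@bil0l _ _ _ _ (@maMDl G)). Qed.
Lemma maM0r (m : gM G) : maM m 0 = 0. Proof. exact: (@bil0r _ _ _ _ (@maMDr G)). Qed.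
Lemma maMNl m (b : gB G) : maM (- m) b = - maM m b. Proof. exact: (@bilNl _ _ _ _ (@maMDl G)). Qed.
Lemma maMNr (m : gM G) b : maM m (- b) = - maM m b. Proof. exact: (@bilNr _ _ _ _ (@maMDr G)). Qed.
Lemma bnN0l (n : gN G) : bnN 0 n = 0. Proof. exact: (@bil0l _ _ _ _ (@bnNDl G)). Qed.
Lemma bnN0r (b : gB G) : bnN b 0 = 0. Proof. exact: (@bil0r _ _ _ _ (@bnNDr G)). Qed.
Lemma bnNNl b (n : gN G) : bnN (- b) n = - bnN b n. Proof. exact: (@bilNl _ _ _ _ (@bnNDl G)). Qed.
Lemma bnNNr (b : gB G) n : bnN b (- n) = - bnN b n. Proof. exact: (@bilNr _ _ _ _ (@bnNDr G)). Qed.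
Lemma naN0l (a : gA G) : naN 0 a = 0. Proof. exact: (@bil0l _ _ _ _ (@naNDl G)). Qed.
Lemma naN0r (n : gN G) : naN n 0 = 0. Proof. exact: (@bil0r _ _ _ _ (@naNDr G)). Qed.
Lemma naNNl n (a : gA G) : naN (- n) a = - naN n a. Proof. exact: (@bilNl _ _ _ _ (@naNDl G)). Qed.
Lemma naNNr (n : gN G) a : naN n (- a) = - naN n a. Proof. exact: (@bilNr _ _ _ _ (@naNDr G)). Qed.
Lemma pMN0l (n : gN G) : pMN 0 n = 0. Proof. exact: (@bil0l _ _ _ _ (@pMNDl G)). Qed.
Lemma pMN0r (m : gM G) : pMN m 0 = 0. Proof. exact: (@bil0r _ _ _ _ (@pMNDr G)). Qed.
Lemma pMNNl m (n : gN G) : pMN (- m) n = - pMN m n. Proof. exact: (@bilNl _ _ _ _ (@pMNDl G)). Qed.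
Lemma pMNNr (m : gM G) n : pMN m (- n) = - pMN m n. Proof. exact: (@bilNr _ _ _ _ (@pMNDr G)). Qed.
Lemma pNM0l (m : gM G) : pNM 0 m = 0. Proof. exact: (@bil0l _ _ _ _ (@pNMDl G)). Qed.
Lemma pNM0r (n : gN G) : pNM n 0 = 0. Proof. exact: (@bil0r _ _ _ _ (@pNMDr G)). Qed.
Lemma pNMNl n (m : gM G) : pNM (- n) m = - pNM n m. Proof. exact: (@bilNl _ _ _ _ (@pNMDl G)). Qed.
Lemma pNMNr (n : gN G) m : pNM n (- m) = - pNM n m. Proof. exact: (@bilNr _ _ _ _ (@pNMDr G)). Qed.
End Basic.

Ltac nrm := repeat progress (rewrite ?mulrDl ?mulrDr ?mulrN ?mulNr ?mul0r ?mulr0 ?mulrA ?mul1r ?mulr1 ?amMDl ?amMDr ?amMNl ?amMNr ?amM0l ?amM0r ?amM1 ?maMDl ?maMDr ?maMNl ?maMNr ?maM0l ?maM0r ?maM1 ?bnNDl ?bnNDr ?bnNNl ?bnNNr ?bnN0l ?bnN0r ?bnN1 ?naNDl ?naNDr ?naNNl ?naNNr ?naN0l ?naN0r ?naN1 ?pMNDl ?pMNDr ?pMNNl ?pMNNr ?pMN0l ?pMN0r ?pNMDl ?pNMDr ?pNMNl ?pNMNr ?pNM0l ?pNM0r -?amMA -?maMA ?amMmaM -?bnNA -?naNA ?bnNnaN ?pMN_amM ?pMN_naN ?pMN_bal ?pNM_bnN ?pNM_maM ?pNM_bal ?pMN_assoc ?pNM_assoc ?opprK ?oppr0 ?addr0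 ?add0r ?opprD).
Ltac nrm_in H := repeat progress (rewrite ?mulrDl ?mulrDr ?mulrN ?mulNr ?mul0r ?mulr0 ?mulrA ?mul1r ?mulr1 ?amMDl ?amMDr ?amMNl ?amMNr ?amM0l ?amM0r ?amM1 ?maMDl ?maMDr ?maMNl ?maMNr ?maM0l ?maM0r ?maM1 ?bnNDl ?bnNDr ?bnNNl ?bnNNr ?bnN0l ?bnN0r ?bnN1 ?naNDl ?naNDr ?naNNl ?naNNr ?naN0l ?naN0r ?naN1 ?pMNDl ?pMNDr ?pMNNl ?pMNNr ?pMN0l ?pMN0r ?pNMDl ?pNMDr ?pNMNl ?pNMNr ?pNM0l ?pNM0r -?amMA -?maMA ?amMmaM -?bnNA -?naNA ?bnNnaN ?pMN_amM ?pMN_naN ?pMN_bal ?pNM_bnN ?pNM_maM ?pNM_bal ?pMN_assoc ?pNM_assoc ?opprK ?oppr0 ?addr0 ?add0r ?opprD in H).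

Section Ring.
Variable G : gmr.
Local Notation R := (gmx G).
Definition gmx_tup (X : R) := (e11 X, e12 X, e21 X, e22 X).
Definition tup_gmx (t : gA G * gM G * gN G * gB G) : R := Gmx t.1.1.1 t.1.1.2 t.1.2 t.2.
Lemma gmx_tupK : cancel gmx_tup tup_gmx. Proof. by case. Qed.
HB.instance Definition _ := Choice.copy R (can_type gmx_tupK).

Lemma gmx_ext (X Y : R) : e11 X = e11 Y -> e12 X = e12 Y -> e21 X = e21 Y -> e22 X = e22 Y -> X = Y.
Proof. by case: X; case: Y => /= ? ? ? ? ? ? ? ? -> -> -> ->. Qed.

Ltac ext := apply: gmx_ext => /=; nrm; try abel.

Lemma gaddA : associative (@gmx_add G). Proof. by move=> *; ext. Qed.
Lemma gaddC : commutative (@gmx_add G). Proof. by move=> *; ext. Qed.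
Lemma gadd0 : left_id (gmx_zero G) (@gmx_add G). Proof. by move=> *; ext. Qed.
Lemma gaddN : left_inverse (gmx_zero G) (@gmx_opp G) (@gmx_add G). Proof. by move=> *; ext. Qed.
Lemma gmulA : associative (@gmx_mul G). Proof. by move=> *; ext. Qed.
Lemma gmul1 : left_id (gmx_one G) (@gmx_mul G). Proof. by move=> *; ext. Qed.
Lemma gmulr1 : right_id (gmx_one G) (@gmx_mul G). Proof. by move=> *; ext. Qed.
Lemma gmulDl : left_distributive (@gmx_mul G) (@gmx_add G). Proof. by move=> *; ext. Qed.
Lemma gmulDr : right_distributive (@gmx_mul G) (@gmx_add G). Proof. by move=> *; ext. Qed.
HB.instance Definition _ := GRing.isPzRing.Build R gaddA gaddC gadd0 gaddN gmulA gmul1 gmulr1 gmulDl gmulDr.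
End Ring.

Ltac gext := apply: gmx_ext => /=; nrm; try abel.
Ltac derive H := move: H => /= H; nrm_in H; nrm;
  first [apply: (etrans _ H); abel | apply/eqP; rewrite -oppr_eq0; apply/eqP; nrm; apply: (etrans _ H); abel].
Ltac deriveT H tac := move: H => /= H; nrm_in H; tac H; nrm_in H; nrm;
  first [apply: (etrans _ H); abel | apply/eqP; rewrite -oppr_eq0; apply/eqP; nrm; apply: (etrans _ H); abel].

Section Main.
Variable G : gmr.
Local Notation R := (gmx G).
Hypothesis tfA : forall a : gA G, a + a = 0 -> a = 0.
Hypothesis tfB : forall b : gB G, b + b = 0 -> b = 0.
Hypothesis faithA : forall a : gA G, (forall m : gM G, amM a m = 0) -> a = 0.
Hypothesis faithB : forall b : gB G, (forall m : gM G, maM m b = 0) -> b = 0.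
Variable phi : R -> R.
Hypothesis phi_add : forall X Y, phi (gmx_add X Y) = gmx_add (phi X) (phi Y).
Hypothesis phi_zp : forall U V, gmx_mul U V = gmx_zero G -> gmx_mul V U = gmx_zero G ->
     gmx_add (gmx_jordan (phi U) V) (gmx_jordan U (phi V)) = gmx_zero G.

Lemma phiD (X Y : R) : phi (X + Y) = phi X + phi Y. Proof. exact: phi_add. Qed.
Lemma phi0 : phi 0 = 0. Proof. by apply: (@addrI _ (phi 0)); rewrite -phiD !addr0. Qed.
Lemma phiN X : phi (- X) = - phi X.
Proof. by apply: (@addrI _ (phi X)); rewrite -phiD !subrr phi0. Qed.
Lemma phizp (U V : R) : U * V = 0 -> V * U = 0 ->
  phi U * V + V * phi U + (U * phi V + phi V * U) = 0.
Proof. exact: phi_zp. Qed.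

Definition E11 (a : gA G) : R := Gmx a 0 0 0.
Definition E12 (m : gM G) : R := Gmx 0 m 0 0.
Definition E21 (n : gN G) : R := Gmx 0 0 n 0.
Definition E22 (b : gB G) : R := Gmx 0 0 0 b.
Local Notation al a := (phi (E11 a)).
Local Notation de b := (phi (E22 b)).

Lemma tfM (m : gA G) : m + m = 0 -> m = 0. Proof. exact: tfA. Qed.

Lemma pairA (a : gA G) (b : gB G) :
  [/\ a * e11 (de b) + e11 (de b) * a = 0,
      maM (e12 (al a)) b + amM a (e12 (de b)) = 0,
      bnN b (e21 (al a)) + naN (e21 (de b)) a = 0 &
      e22 (al a) * b + b * e22 (al a) = 0].
Proof.
have H := @phizp (E11 a) (E22 b).
have {H} H : phi (E11 a) * E22 b + E22 b * phi (E11 a) + (E11 a * phi (E22 b) + phi (E22 b) * E11 a) = 0.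
  by apply: H; gext.
split.
- have H1 := congr1 (@e11 G) H; derive H1.
- have H1 := congr1 (@e12 G) H; derive H1.
- have H1 := congr1 (@e21 G) H; derive H1.
- have H1 := congr1 (@e22 G) H; derive H1.
Qed.

Lemma A11 b : e11 (de b) = 0.
Proof. by case: (pairA 1 b) => H _ _ _; apply: tfA; move: H; rewrite mulr1 mul1r. Qed.
Lemma A22 a : e22 (al a) = 0.
Proof. by case: (pairA a 1) => _ _ _ H; apply: tfB; move: H; rewrite mulr1 mul1r. Qed.
Lemma A12_11 : e12 (de 1) = - e12 (al 1).
Proof. case: (pairA 1 1) => _ H _ _; move: H; rewrite maM1 amM1 => /eqP; by rewrite addrC addr_eq0 => /eqP. Qed.
Lemma A21_11 : e21 (de 1) = - e21 (al 1).
Proof. case: (pairA 1 1) => _ _ H _; move: H; rewrite bnN1 naN1 => /eqP; by rewrite addrC addr_eq0 => /eqP. Qed.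
Lemma A12a a : e12 (al a) = amM a (e12 (al 1)).
Proof.
case: (pairA a 1) => _ H _ _; move: H; rewrite maM1 A12_11 amMNr => /eqP.
by rewrite addr_eq0 opprK => /eqP.
Qed.
Lemma A12b b : e12 (de b) = - maM (e12 (al 1)) b.
Proof.
case: (pairA 1 b) => _ H _ _; move: H; rewrite amM1 => /eqP.
by rewrite addrC addr_eq0 => /eqP.
Qed.
Lemma A21a a : e21 (al a) = - naN (e21 (de 1)) a.
Proof.
case: (pairA a 1) => _ _ H _; move: H; rewrite bnN1 => /eqP.
by rewrite addr_eq0 => /eqP.
Qed.
Lemma A21b b : e21 (de b) = bnN b (e21 (de 1)).
Proof.
case: (pairA 1 b) => _ _ H _; move: H; rewrite naN1 => /eqP.
rewrite addrC addr_eq0 => /eqP ->. by rewrite A21_11 bnNNr.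
Qed.

Definition Z : R := phi 1.
Definition T : R := E11 1 * phi (E11 1) * E22 1 + E22 1 * phi (E22 1) * E11 1.
Definition z1 := e11 (al 1).
Definition z2 := e22 (de 1).
Lemma one_split : (1 : R) = E11 1 + E22 1. Proof. by gext. Qed.
Lemma Zdef : Z = Gmx z1 0 0 z2.
Proof.
rewrite /Z one_split phiD; apply: gmx_ext => /=.
- by rewrite A11 addr0.
- by rewrite A12_11 subrr.
- by rewrite A21_11 addrN.
- by rewrite A22 add0r.
Qed.
Lemma Tdef : T = Gmx 0 (e12 (al 1)) (e21 (de 1)) 0.
Proof. by rewrite /T; gext. Qed.

Definition psi : R -> R := locked (fun X => phi X - Z * X + (T * X - X * T)).
Lemma psiE X : psi X = phi X - Z * X + (T * X - X * T).
Proof. by rewrite /psi; unlock. Qed.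

Lemma psiD X Y : psi (X + Y) = psi X + psi Y.
Proof. rewrite !psiE phiD !mulrDr !mulrDl; abel. Qed.
Lemma psi0 : psi 0 = 0. Proof. by apply: (@addrI _ (psi 0)); rewrite -psiD !addr0. Qed.
Lemma psiN X : psi (- X) = - psi X.
Proof. by apply: (@addrI _ (psi X)); rewrite -psiD !subrr psi0. Qed.

Lemma psi11 a : psi (E11 a) = E11 (e11 (al a) - z1 * a).
Proof.
rewrite !psiE Zdef Tdef; apply: gmx_ext => /=; nrm.
- by [].
- rewrite [e12 (al a)]A12a; abel.
- rewrite [e21 (al a)]A21a; abel.
- by rewrite A22.
Qed.
Lemma psi22 b : psi (E22 b) = E22 (e22 (de b) - z2 * b).
Proof.
rewrite !psiE Zdef Tdef; apply: gmx_ext => /=; nrm.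
- by rewrite A11.
- rewrite [e12 (de b)]A12b; abel.
- rewrite [e21 (de b)]A21b; abel.
- by [].
Qed.

Lemma B4M m : pMN m (e21 (phi (E12 m))) = 0 /\ pNM (e21 (phi (E12 m))) m = 0.
Proof.
have H := @phizp (E12 m) (E12 m).
have {H} H : phi (E12 m) * E12 m + E12 m * phi (E12 m) + (E12 m * phi (E12 m) + phi (E12 m) * E12 m) = 0.
  by apply: H; gext.
split.
- apply: tfA; have H1 := congr1 (@e11 G) H; derive H1.
- apply: tfB; have H1 := congr1 (@e22 G) H; derive H1.
Qed.
Lemma B4N n : pMN (e12 (phi (E21 n))) n = 0 /\ pNM n (e12 (phi (E21 n))) = 0.
Proof.
have H := @phizp (E21 n) (E21 n).
have {H} H : phi (E21 n) * E21 n + E21 n * phi (E21 n) + (E21 n * phi (E21 n) + phi (E21 n) * E21 n) = 0.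
  by apply: H; gext.
split.
- apply: tfA; have H1 := congr1 (@e11 G) H; derive H1.
- apply: tfB; have H1 := congr1 (@e22 G) H; derive H1.
Qed.
Lemma rE m : e21 (psi (E12 m)) = e21 (phi (E12 m)).
Proof. by rewrite !psiE Zdef Tdef /=; nrm. Qed.
Lemma r'E n : e12 (psi (E21 n)) = e12 (phi (E21 n)).
Proof. by rewrite !psiE Zdef Tdef /=; nrm. Qed.
Lemma B4M' m : pMN m (e21 (psi (E12 m))) = 0 /\ pNM (e21 (psi (E12 m))) m = 0.
Proof. by rewrite rE; apply: B4M. Qed.
Lemma B4N' n : pMN (e12 (psi (E21 n))) n = 0 /\ pNM n (e12 (psi (E21 n))) = 0.
Proof. by rewrite r'E; apply: B4N. Qed.

Lemma star_gen (Z' T' X Y : R) : X * Y = 0 -> Y * X = 0 ->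
  let ps := fun W => phi W - Z' * W + (T' * W - W * T') in
  ps X * Y + Y * ps X + (X * ps Y + ps Y * X) + (X * Z' * Y + Y * Z' * X) = 0.
Proof.
move=> HXY HYX ps; have H := phizp HXY HYX.
have HXYr A : X * (Y * A) = 0 by rewrite mulrA HXY mul0r.
have HYXr A : Y * (X * A) = 0 by rewrite mulrA HYX mul0r.
apply: (etrans _ H); rewrite /ps.
rewrite !(mulrDl, mulrDr, mulrBl, mulrBr, mulrN, mulNr, opprD, opprK) -!mulrA ?HXYr ?HYXr ?HXY ?HYX ?mulr0 ?oppr0 ?addr0 ?add0r.
abel.
Qed.
Lemma star (X Y : R) : X * Y = 0 -> Y * X = 0 ->
  psi X * Y + Y * psi X + (X * psi Y + psi Y * X) + (X * Z * Y + Y * Z * X) = 0.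
Proof. rewrite !psiE; exact: star_gen. Qed.

Lemma E11_0 : E11 0 = 0. Proof. by gext. Qed.
Lemma E22_0 : E22 0 = 0. Proof. by gext. Qed.
Lemma psi11_1 : psi (E11 1) = 0.
Proof. by rewrite psi11 /z1 mulr1 subrr E11_0. Qed.
Lemma psi22_1 : psi (E22 1) = 0.
Proof. by rewrite psi22 /z2 mulr1 subrr E22_0. Qed.

Lemma pairC m :
  [/\ e11 (psi (E12 m)) = 0, e22 (psi (E12 m)) = 0 & maM m z2 = amM z1 m].
Proof.
have H := @star (Gmx 1 m 0 0) (Gmx 0 (-m) 0 1).
have {H} H : psi (E12 m) * Gmx 0 (-m) 0 1 + Gmx 0 (-m) 0 1 * psi (E12 m) +
   (Gmx 1 m 0 0 * - psi (E12 m) + - psi (E12 m) * Gmx 1 m 0 0) +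
   (Gmx 1 m 0 0 * Gmx z1 0 0 z2 * Gmx 0 (-m) 0 1 + Gmx 0 (-m) 0 1 * Gmx z1 0 0 z2 * Gmx 1 m 0 0) = 0.
  rewrite -Zdef.
  rewrite (_ : Gmx 1 m 0 0 = E11 1 + E12 m) in H; last by gext.
  rewrite (_ : Gmx 0 (-m) 0 1 = E22 1 - E12 m) in H; last by gext.
  rewrite psiD psiD psiN psi11_1 psi22_1 add0r ?add0r in H.
  rewrite (_ : E11 1 + E12 m = Gmx 1 m 0 0) in H; last by gext.
  rewrite (_ : E22 1 - E12 m = Gmx 0 (-m) 0 1) in H; last by gext.
  by apply: H; gext.
case: (B4M' m) => B1 B2.
move: H B1 B2; move: (psi (E12 m)) => Y H B1 B2.
have p0 : e11 Y = 0.
  apply: tfA; have H1 := congr1 (@e11 G) H; deriveT H1 ltac:(fun H => rewrite ?B1 ?B2 in H).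
have q0 : e22 Y = 0.
  apply: tfB; have H1 := congr1 (@e22 G) H; deriveT H1 ltac:(fun H => rewrite ?B1 ?B2 in H).
split => //.
apply/eqP; rewrite -subr_eq0; apply/eqP.
have H1 := congr1 (@e12 G) H; deriveT H1 ltac:(fun H => rewrite ?p0 ?q0 in H).
Qed.

Lemma pairC' n :
  [/\ e11 (psi (E21 n)) = 0, e22 (psi (E21 n)) = 0 & naN n z1 = bnN z2 n].
Proof.
have H := @star (Gmx 1 0 n 0) (Gmx 0 0 (-n) 1).
have {H} H : psi (E21 n) * Gmx 0 0 (-n) 1 + Gmx 0 0 (-n) 1 * psi (E21 n) +
   (Gmx 1 0 n 0 * - psi (E21 n) + - psi (E21 n) * Gmx 1 0 n 0) +
   (Gmx 1 0 n 0 * Gmx z1 0 0 z2 * Gmx 0 0 (-n) 1 + Gmx 0 0 (-n) 1 * Gmx z1 0 0 z2 * Gmx 1 0 n 0) = 0.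
  rewrite -Zdef.
  rewrite (_ : Gmx 1 0 n 0 = E11 1 + E21 n) in H; last by gext.
  rewrite (_ : Gmx 0 0 (-n) 1 = E22 1 - E21 n) in H; last by gext.
  rewrite psiD psiD psiN psi11_1 psi22_1 add0r ?add0r in H.
  rewrite (_ : E11 1 + E21 n = Gmx 1 0 n 0) in H; last by gext.
  rewrite (_ : E22 1 - E21 n = Gmx 0 0 (-n) 1) in H; last by gext.
  by apply: H; gext.
case: (B4N' n) => B1 B2.
move: H B1 B2; move: (psi (E21 n)) => Y H B1 B2.
have p0 : e11 Y = 0.
  apply: tfA; have H1 := congr1 (@e11 G) H; deriveT H1 ltac:(fun H => rewrite ?B1 ?B2 in H).
have q0 : e22 Y = 0.
  apply: tfB; have H1 := congr1 (@e22 G) H; deriveT H1 ltac:(fun H => rewrite ?B1 ?B2 in H).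
split => //.
apply/eqP; rewrite -subr_eq0; apply/eqP.
have H1 := congr1 (@e21 G) H; deriveT H1 ltac:(fun H => rewrite ?p0 ?q0 in H).
Qed.

Lemma zcM m : maM m z2 = amM z1 m. Proof. by case: (pairC m). Qed.
Lemma zcN n : naN n z1 = bnN z2 n. Proof. by case: (pairC' n). Qed.
Lemma z1c a : z1 * a = a * z1.
Proof.
apply/eqP; rewrite -subr_eq0; apply/eqP; apply: faithA => m.
rewrite amMDl amMNl !amMA -[amM z1 (amM a m)]zcM -[amM z1 m]zcM -amMmaM.
exact: subrr.
Qed.
Lemma z2c b : z2 * b = b * z2.
Proof.
apply/eqP; rewrite -subr_eq0; apply/eqP; apply: faithB => m.
rewrite maMDr maMNr !maMA [maM m z2]zcM [maM (maM m b) z2]zcM amMmaM.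
exact: subrr.
Qed.
Lemma Zc X : Z * X = X * Z.
Proof.
rewrite Zdef; apply: gmx_ext => /=; nrm.
- exact: z1c.
- by rewrite zcM.
- by rewrite zcN.
- exact: z2c.
Qed.
Lemma psizp (X Y : R) : X * Y = 0 -> Y * X = 0 ->
  psi X * Y + Y * psi X + (X * psi Y + psi Y * X) = 0.
Proof.
move=> h1 h2; have := star h1 h2.
by rewrite -(Zc X) -(Zc Y) -!mulrA h1 h2 !mulr0 !addr0.
Qed.

Definition dA a := e11 (psi (E11 a)).
Definition dB b := e22 (psi (E22 b)).
Definition f m := e12 (psi (E12 m)).
Definition r m := e21 (psi (E12 m)).
Definition r' n := e12 (psi (E21 n)).
Definition g n := e21 (psi (E21 n)).

Lemma psiE11 a : psi (E11 a) = E11 (dA a). Proof. by rewrite /dA psi11. Qed.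
Lemma psiE22 b : psi (E22 b) = E22 (dB b). Proof. by rewrite /dB psi22. Qed.
Lemma psiE12 m : psi (E12 m) = Gmx 0 (f m) (r m) 0.
Proof. by case: (pairC m) => h1 h2 _; apply: gmx_ext. Qed.
Lemma psiE21 n : psi (E21 n) = Gmx 0 (r' n) (g n) 0.
Proof. by case: (pairC' n) => h1 h2 _; apply: gmx_ext. Qed.
Lemma psi_gen a m n b : psi (Gmx a m n b) = Gmx (dA a) (f m + r' n) (r m + g n) (dB b).
Proof.
rewrite (_ : Gmx a m n b = E11 a + E12 m + E21 n + E22 b); last by gext.
by rewrite !psiD psiE11 psiE12 psiE21 psiE22; gext.
Qed.

Lemma E11D x y : E11 (x + y) = E11 x + E11 y. Proof. by gext. Qed.
Lemma E22D x y : E22 (x + y) = E22 x + E22 y. Proof. by gext. Qed.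
Lemma E12D x y : E12 (x + y) = E12 x + E12 y. Proof. by gext. Qed.
Lemma E21D x y : E21 (x + y) = E21 x + E21 y. Proof. by gext. Qed.
Lemma E11N x : E11 (- x) = - E11 x. Proof. by gext. Qed.
Lemma E22N x : E22 (- x) = - E22 x. Proof. by gext. Qed.
Lemma E12N x : E12 (- x) = - E12 x. Proof. by gext. Qed.
Lemma E21N x : E21 (- x) = - E21 x. Proof. by gext. Qed.
Lemma E12_0 : E12 0 = 0. Proof. by gext. Qed.
Lemma E21_0 : E21 0 = 0. Proof. by gext. Qed.

Lemma dAD x y : dA (x + y) = dA x + dA y. Proof. by rewrite /dA E11D psiD. Qed.
Lemma dBD x y : dB (x + y) = dB x + dB y. Proof. by rewrite /dB E22D psiD. Qed.
Lemma fD x y : f (x + y) = f x + f y. Proof. by rewrite /f E12D psiD. Qed.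
Lemma rD x y : r (x + y) = r x + r y. Proof. by rewrite /r E12D psiD. Qed.
Lemma r'D x y : r' (x + y) = r' x + r' y. Proof. by rewrite /r' E21D psiD. Qed.
Lemma gD x y : g (x + y) = g x + g y. Proof. by rewrite /g E21D psiD. Qed.
Lemma fN x : f (- x) = - f x. Proof. by rewrite /f E12N psiN. Qed.
Lemma rN x : r (- x) = - r x. Proof. by rewrite /r E12N psiN. Qed.
Lemma r'N x : r' (- x) = - r' x. Proof. by rewrite /r' E21N psiN. Qed.
Lemma gN x : g (- x) = - g x. Proof. by rewrite /g E21N psiN. Qed.
Lemma dA0 : dA 0 = 0. Proof. by rewrite /dA E11_0 psi0. Qed.
Lemma dB0 : dB 0 = 0. Proof. by rewrite /dB E22_0 psi0. Qed.
Lemma f0 : f 0 = 0. Proof. by rewrite /f E12_0 psi0. Qed.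
Lemma r0 : r 0 = 0. Proof. by rewrite /r E12_0 psi0. Qed.
Lemma r'0 : r' 0 = 0. Proof. by rewrite /r' E21_0 psi0. Qed.
Lemma g0 : g 0 = 0. Proof. by rewrite /g E21_0 psi0. Qed.
Lemma dA1 : dA 1 = 0. Proof. by rewrite /dA psi11_1. Qed.
Lemma dB1 : dB 1 = 0. Proof. by rewrite /dB psi22_1. Qed.
Lemma B4r m : pMN m (r m) = 0 /\ pNM (r m) m = 0. Proof. exact: B4M'. Qed.
Lemma B4r' n : pMN (r' n) n = 0 /\ pNM n (r' n) = 0. Proof. exact: B4N'. Qed.

Ltac zs H := rewrite ?dA0 ?dB0 ?f0 ?r0 ?r'0 ?g0 ?dA1 ?dB1 ?fN ?rN ?r'N ?gN ?addr0 ?add0r in H.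

Lemma pairIV a m : f (amM a m) = amM (dA a) m + amM a (f m) /\ r (amM a m) = naN (r m) a.
Proof.
have H := @psizp (Gmx a (amM a m) 0 0) (Gmx 0 (-m) 0 1).
have {H} H := H ltac:(by gext) ltac:(by gext).
rewrite !psi_gen in H; zs H.
split; apply/eqP; rewrite -subr_eq0; apply/eqP.
- have H1 := congr1 (@e12 G) H; derive H1.
- have H1 := congr1 (@e21 G) H; derive H1.
Qed.
Lemma pairV m b : f (maM m b) = maM (f m) b + maM m (dB b) /\ r (maM m b) = bnN b (r m).
Proof.
have H := @psizp (Gmx 1 m 0 0) (Gmx 0 (- maM m b) 0 b).
have {H} H := H ltac:(by gext) ltac:(by gext).
rewrite !psi_gen in H; zs H.
split; apply/eqP; rewrite -subr_eq0; apply/eqP.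
- have H1 := congr1 (@e12 G) H; derive H1.
- have H1 := congr1 (@e21 G) H; derive H1.
Qed.
Lemma pairIV' n a : r' (naN n a) = amM a (r' n) /\ g (naN n a) = naN (g n) a + naN n (dA a).
Proof.
have H := @psizp (Gmx a 0 (naN n a) 0) (Gmx 0 0 (-n) 1).
have {H} H := H ltac:(by gext) ltac:(by gext).
rewrite !psi_gen in H; zs H.
split; apply/eqP; rewrite -subr_eq0; apply/eqP.
- have H1 := congr1 (@e12 G) H; derive H1.
- have H1 := congr1 (@e21 G) H; derive H1.
Qed.
Lemma pairV' n b : r' (bnN b n) = maM (r' n) b /\ g (bnN b n) = bnN b (g n) + bnN (dB b) n.
Proof.
have H := @psizp (Gmx 1 0 n 0) (Gmx 0 0 (- bnN b n) b).
have {H} H := H ltac:(by gext) ltac:(by gext).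
rewrite !psi_gen in H; zs H.
split; apply/eqP; rewrite -subr_eq0; apply/eqP.
- have H1 := congr1 (@e12 G) H; derive H1.
- have H1 := congr1 (@e21 G) H; derive H1.
Qed.
Lemma pairVI m n : dA (pMN m n) = pMN (f m) n + pMN m (g n) /\
                   dB (pNM n m) = pNM (g n) m + pNM n (f m).
Proof.
have H := @psizp (Gmx 1 m n (pNM n m)) (Gmx (pMN m n) (-m) (-n) 1).
have {H} H := H ltac:(by gext) ltac:(by gext).
rewrite !psi_gen in H; zs H.
case: (B4r m) => B1 B2; case: (B4r' n) => B3 B4.
split; apply/eqP; rewrite -subr_eq0; apply/eqP.
- apply: tfA; have H1 := congr1 (@e11 G) H; deriveT H1 ltac:(fun H => rewrite ?B1 ?B2 ?B3 ?B4 in H).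
- apply: tfB; have H1 := congr1 (@e22 G) H; deriveT H1 ltac:(fun H => rewrite ?B1 ?B2 ?B3 ?B4 in H).
Qed.

Lemma dAM a a' : dA (a * a') = dA a * a' + a * dA a'.
Proof.
apply/eqP; rewrite -subr_eq0; apply/eqP; apply: faithA => m.
have e1 := (pairIV (a * a') m).1; have e2 := (pairIV a (amM a' m)).1;
have e3 := (pairIV a' m).1.
rewrite amMA e2 e3 in e1.
have E : amM (dA (a * a')) m = amM (dA a) (amM a' m) + amM a (amM (dA a') m + amM a' (f m)) - amM (a * a') (f m).
  by rewrite e1 addrK.
rewrite amMDl amMNl amMDl E; nrm; abel.
Qed.
Lemma dBM b b' : dB (b * b') = dB b * b' + b * dB b'.
Proof.
apply/eqP; rewrite -subr_eq0; apply/eqP; apply: faithB => m.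
have e1 := (pairV m (b * b')).1; have e2 := (pairV (maM m b) b').1;
have e3 := (pairV m b).1.
rewrite maMA e2 e3 in e1.
have E : maM m (dB (b * b')) = maM (maM (f m) b + maM m (dB b)) b' + maM (maM m b) (dB b') - maM (f m) (b * b').
  by rewrite e1 (addrC (maM (f m) (b * b'))) addrK.
rewrite maMDr maMNr maMDr E; nrm; abel.
Qed.

Lemma final U : psi (U * U) = psi U * U + U * psi U.
Proof.
case: U => a m n b.
rewrite (_ : Gmx a m n b * Gmx a m n b = Gmx (a * a + pMN m n) (amM a m + maM m b)
   (bnN b n + naN n a) (pNM n m + b * b)); last by [].
rewrite !psi_gen.
case: (B4r m) => B1 B2; case: (B4r' n) => B3 B4.
apply: gmx_ext => /=; rewrite ?dAD ?dBD ?fD ?rD ?r'D ?gD ?dAM ?dBM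
  ?(pairVI m n).1 ?(pairVI m n).2 ?(pairIV a m).1 ?(pairIV a m).2 ?(pairV m b).1 ?(pairV m b).2
  ?(pairIV' n a).1 ?(pairIV' n a).2 ?(pairV' n b).1 ?(pairV' n b).2;
  nrm; rewrite ?B1 ?B2 ?B3 ?B4; nrm; abel.
Qed.
End Main.

Unset Implicit Arguments.

Theorem lemma2p7 (G : gmr)
  (tfA : forall a : gA G, a + a = 0 -> a = 0)
  (tfB : forall b : gB G, b + b = 0 -> b = 0)
  (faithA : forall a : gA G, (forall m : gM G, amM a m = 0) -> a = 0)
  (faithB : forall b : gB G, (forall m : gM G, maM m b = 0) -> b = 0)
  (phi : gmx G -> gmx G)
  (phi_add : forall X Y, phi (gmx_add X Y) = gmx_add (phi X) (phi Y))
  (phi_zp : forall U V, gmx_mul U V = gmx_zero G -> gmx_mul V U = gmx_zero G ->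
     gmx_add (gmx_jordan (phi U) V) (gmx_jordan U (phi V)) = gmx_zero G) :
  let T := gmx_add (gmx_mul (gmx_mul (gmx_P1 G) (phi (gmx_P1 G))) (gmx_P2 G))
                   (gmx_mul (gmx_mul (gmx_P2 G) (phi (gmx_P2 G))) (gmx_P1 G)) in
  let vphi := fun U => gmx_add (gmx_sub (phi U) (gmx_mul (phi (gmx_one G)) U))
                               (gmx_comm T U) in
  forall U : gmx G,
    vphi (gmx_mul U U) = gmx_add (gmx_mul (vphi U) U) (gmx_mul U (vphi U)).
Proof.
move=> T vphi U.
have E X : vphi X = psi phi X by rewrite psiE.
rewrite !E.
by apply: final.
Qed.
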